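(* Let $\vartheta\in\{p,bp,r\}$. The inclusion $\int\mathcal{L}_u\subset\mathcal{H}_{\vartheta}$ holds and is strict.
   Context: $\Omega$ denotes the set of all complex double sequences $x=(x_{kl})_{k,l\ge 1}$. A double sequence is $p$-convergent (Pringsheim convergent) to $L$ if for every $\varepsilon>0$ there is $N$ with $|x_{kl}-L|<\varepsilon$ for all $k,l\ge N$; $bp$-convergent if bounded and $p$-convergent; $r$-convergent (regularly convergent) if $p$-convergent and every row and every column converges. For $\vartheta\in\{p,bp,r\}$, $\mathcal{C}_{\vartheta 0}$ is the set of double sequences $\vartheta$-convergent to $0$. $\Delta x_{kl}=x_{kl}-x_{k+1,l}-x_{k,l+1}+x_{k+1,l+1}$, and $\mathcal{H}_{\vartheta}=\{x\in\Omega:\sum_{k,l=1}^{\infty}|kl\,\Delta x_{kl}|<\infty\}\cap\mathcal{C}_{\vartheta 0}$. $\mathcal{L}_u=\{x\in\Omega:\sum_{k,l}|x_{kl}|<\infty\}$, and $\int\mathcal{L}_u=\{x\in\Omega:(kl\,x_{kl})_{k,l}\in\mathcal{L}_u\}$. *)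

(* Defs.v *)
From Stdlib Require Import Reals.
From Coquelicot Require Import Coquelicot.
Open Scope R_scope.

(* A complex double sequence x = (x_{kl})_{k,l>=1} is represented by
   x : nat -> nat -> C with  x k l  standing for  x_{k+1,l+1}. *)
Definition dseq := nat -> nat -> C.

(* weight k*l in the paper's 1-based indexing *)
Definition wt (k l : nat) : R := INR (S k) * INR (S l).

(* sum_{k,l} |a_{kl}| < oo  (for nonnegative terms: bounded rectangular
   partial sums) *)
Definition abs_summable (a : dseq) : Prop :=
  exists M : R, forall m n : nat,
    sum_n (fun k => sum_n (fun l => Cmod (a k l)) n) m <= M.

Definition Lu (x : dseq) : Prop := abs_summable x.

Definition intLu (x : dseq) : Prop :=
  Lu (fun k l => Cmult (RtoC (wt k l)) (x k l)).

Definition Delta (x : dseq) (k l : nat) : C :=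
  Cplus (Cminus (Cminus (x k l) (x (S k) l)) (x k (S l))) (x (S k) (S l)).

Definition p_conv (x : dseq) (L : C) : Prop :=
  forall eps : R, 0 < eps -> exists N : nat,
    forall k l : nat, (N <= k)%nat -> (N <= l)%nat -> Cmod (Cminus (x k l) L) < eps.

Definition bounded_dseq (x : dseq) : Prop :=
  exists M : R, forall k l : nat, Cmod (x k l) <= M.

Definition bp_conv (x : dseq) (L : C) : Prop := bounded_dseq x /\ p_conv x L.

Definition seq_conv (u : nat -> C) : Prop :=
  exists L : C, forall eps : R, 0 < eps -> exists N : nat,
    forall n : nat, (N <= n)%nat -> Cmod (Cminus (u n) L) < eps.

Definition r_conv (x : dseq) (L : C) : Prop :=
  p_conv x L /\ (forall k : nat, seq_conv (fun l => x k l))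
             /\ (forall l : nat, seq_conv (fun k => x k l)).

Inductive mode := p_mode | bp_mode | r_mode.

Definition conv (th : mode) : dseq -> C -> Prop :=
  match th with
  | p_mode => p_conv
  | bp_mode => bp_conv
  | r_mode => r_conv
  end.

Definition C0 (th : mode) (x : dseq) : Prop := conv th x (RtoC 0).

Definition H (th : mode) (x : dseq) : Prop :=
  abs_summable (fun k l => Cmult (RtoC (wt k l)) (Delta x k l)) /\ C0 th x.

(* Main.v *)
Require Import Defs.
From Stdlib Require Import Reals Lra Lia.
From Coquelicot Require Import Coquelicot.

Open Scope R_scope.

Ltac Rring := match goal with |- ?a = ?b => change (@eq R a b) end; ring.

Lemma sumR_Sn (f : nat -> R) n : sum_n f (S n) = sum_n f n + f (S n).
Proof. rewrite sum_Sn. reflexivity. Qed.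

Lemma sumR_nonneg (f : nat -> R) n : (forall k, 0 <= f k) -> 0 <= sum_n f n.
Proof.
  intros Hf; induction n. rewrite sum_O; auto.
  rewrite sumR_Sn. specialize (Hf (S n)). lra.
Qed.

Lemma sumR_le (f g : nat -> R) n : (forall k, f k <= g k) -> sum_n f n <= sum_n g n.
Proof.
  intros Hf; induction n. rewrite !sum_O; auto.
  rewrite !sumR_Sn. specialize (Hf (S n)). lra.
Qed.

Lemma sumR_term (f : nat -> R) n i : (forall k, 0 <= f k) -> (i <= n)%nat -> f i <= sum_n f n.
Proof.
  intros Hf Hi; induction n.
  - assert (i = 0%nat) by lia; subst. rewrite sum_O; lra.
  - rewrite sumR_Sn. destruct (Nat.eq_dec i (S n)).
    + subst. pose proof (sumR_nonneg f n Hf). lra.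
    + assert (Hin : (i <= n)%nat) by lia. specialize (IHn Hin). specialize (Hf (S n)). lra.
Qed.

Lemma sumR_shift (f : nat -> R) n : sum_n f (S n) = f 0%nat + sum_n (fun k => f (S k)) n.
Proof.
  induction n.
  - rewrite sumR_Sn, !sum_O. reflexivity.
  - rewrite sumR_Sn, IHn, (sumR_Sn (fun k => f (S k))). Rring.
Qed.

Lemma sumR_shift_le (f : nat -> R) n : (forall k, 0 <= f k) ->
  sum_n (fun k => f (S k)) n <= sum_n f (S n).
Proof. intros Hf. rewrite sumR_shift. specialize (Hf 0%nat). lra. Qed.

Lemma sumR_plus (f g : nat -> R) n : sum_n (fun k => f k + g k) n = sum_n f n + sum_n g n.
Proof.
  induction n. rewrite !sum_O; auto.
  rewrite !sumR_Sn, IHn. Rring.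
Qed.

Lemma Cmod_wt (k l : nat) (z : C) : Cmod (Cmult (RtoC (wt k l)) z) = wt k l * Cmod z.
Proof.
  rewrite Cmod_mult, Cmod_R, Rabs_pos_eq; auto.
  unfold wt. apply Rmult_le_pos; apply pos_INR.
Qed.

Lemma INRS_ge1 n : 1 <= INR (S n).
Proof. rewrite S_INR. pose proof (pos_INR n). lra. Qed.

Lemma decay (x : dseq) : intLu x -> exists M, 0 <= M /\ forall k l,
  Cmod (x k l) * INR (S k) <= M /\ Cmod (x k l) * INR (S l) <= M /\ Cmod (x k l) <= M.
Proof.
  intros [M HM]. exists M.
  assert (H0 : forall k l, Cmod (x k l) * wt k l <= M).
  { intros k l. specialize (HM k l).
    eapply Rle_trans; [|exact HM].
    eapply Rle_trans; [|apply (sumR_term _ k k)].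
    2:{ intros; apply sumR_nonneg; intros; apply Cmod_ge_0. }
    2: lia.
    eapply Rle_trans; [|apply (sumR_term _ l l)].
    2:{ intros; apply Cmod_ge_0. }
    2: lia.
    cbv beta. rewrite Cmod_wt. lra. }
  split.
  { specialize (H0 0%nat 0%nat). pose proof (Cmod_ge_0 (x 0%nat 0%nat)).
    unfold wt in H0. pose proof (INRS_ge1 0). nra. }
  intros k l. specialize (H0 k l). unfold wt in H0.
  pose proof (Cmod_ge_0 (x k l)) as P1. pose proof (INRS_ge1 k) as P2. pose proof (INRS_ge1 l) as P3.
  set (c := Cmod (x k l)) in *. set (a := INR (S k)) in *. set (b := INR (S l)) in *.
  assert (c * a <= c * a * b) by (rewrite <- (Rmult_1_r (c*a)) at 1; apply Rmult_le_compat_l; nra).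
  assert (c * b <= c * a * b) by (replace (c*a*b) with (c*b*a) by ring;
     rewrite <- (Rmult_1_r (c*b)) at 1; apply Rmult_le_compat_l; nra).
  assert (c <= c * a) by (rewrite <- (Rmult_1_r c) at 1; apply Rmult_le_compat_l; nra).
  repeat split; lra.
Qed.

Lemma tail M eps : 0 < eps -> exists N, forall n c, 0 <= c -> c * INR (S n) <= M ->
  (N <= n)%nat -> c < eps.
Proof.
  intros He. destruct (INR_unbounded (M / eps)) as [N HN].
  exists N. intros n c Hc HM Hn.
  apply le_INR in Hn. rewrite S_INR in HM.
  assert (M < eps * INR N).
  { apply (Rmult_lt_compat_l eps) in HN; auto. unfold Rdiv in HN.
    rewrite <- Rmult_assoc, (Rmult_comm eps M), Rmult_assoc, Rinv_r in HN; lra. }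
  destruct (Rlt_or_le c eps) as [|Hce]; auto. exfalso.
  pose proof (pos_INR n). pose proof (pos_INR N).
  assert (eps * INR N <= c * (INR n + 1)).
  { apply Rmult_le_compat; lra. }
  lra.
Qed.

Lemma Cminus0 (z : C) : Cminus z (RtoC 0) = z.
Proof. destruct z. unfold Cminus, Cplus, Copp, RtoC. simpl. f_equal; ring. Qed.

Lemma part1 th x : intLu x -> H th x.
Proof.
  intros Hx. pose proof Hx as Hd. apply decay in Hd. destruct Hd as [M0 [HM0 Hd]].
  assert (Hp : p_conv x (RtoC 0)).
  { intros eps He. destruct (tail M0 eps He) as [N HN]. exists N.
    intros k l Hk Hl. rewrite Cminus0. apply (HN k); [apply Cmod_ge_0|apply (Hd k l)|exact Hk]. }
  assert (Hr : forall k, seq_conv (fun l => x k l)).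
  { intros k. exists (RtoC 0). intros eps He. destruct (tail M0 eps He) as [N HN]. exists N.
    intros l Hl. rewrite Cminus0. apply (HN l); [apply Cmod_ge_0|apply (Hd k l)|exact Hl]. }
  assert (Hc : forall l, seq_conv (fun k => x k l)).
  { intros l. exists (RtoC 0). intros eps He. destruct (tail M0 eps He) as [N HN]. exists N.
    intros k Hk. rewrite Cminus0. apply (HN k); [apply Cmod_ge_0|apply (Hd k l)|exact Hk]. }
  assert (Hb : bounded_dseq x). { exists M0. intros k l. apply Hd. }
  split.
  2:{ destruct th; simpl; unfold C0, conv, bp_conv, r_conv; auto. }
  destruct Hx as [M HM]. exists (4 * M).
  set (a := fun k l => Cmod (Cmult (RtoC (wt k l)) (x k l))).
  assert (Ha : forall k l, 0 <= a k l) by (intros; apply Cmod_ge_0).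
  assert (Hs : forall k n, 0 <= sum_n (a k) n) by (intros; apply sumR_nonneg; auto).
  assert (Hwt : forall k l, 0 <= wt k l) by (intros; unfold wt; apply Rmult_le_pos; apply pos_INR).
  assert (Hw1 : forall k l, wt k l <= wt (S k) l).
  { intros; unfold wt. apply Rmult_le_compat_r; [apply pos_INR|apply le_INR; lia]. }
  assert (Hw2 : forall k l, wt k l <= wt k (S l)).
  { intros; unfold wt. apply Rmult_le_compat_l; [apply pos_INR|apply le_INR; lia]. }
  assert (Ha' : forall k l, a k l = wt k l * Cmod (x k l)) by (intros; unfold a; apply Cmod_wt).
  assert (Hpt : forall k l, Cmod (Cmult (RtoC (wt k l)) (Defs.Delta x k l)) <=
     a k l + a (S k) l + a k (S l) + a (S k) (S l)).
  { intros k l. rewrite Cmod_wt, !Ha'.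
    assert (Cmod (Defs.Delta x k l) <= Cmod (x k l) + Cmod (x (S k) l) + Cmod (x k (S l)) + Cmod (x (S k) (S l))).
    { unfold Defs.Delta, Cminus.
      eapply Rle_trans; [apply Cmod_triangle|].
      eapply Rle_trans; [apply Rplus_le_compat_r; apply Cmod_triangle|].
      eapply Rle_trans; [apply Rplus_le_compat_r; apply Rplus_le_compat_r; apply Cmod_triangle|].
      rewrite !Cmod_opp. lra. }
    pose proof (Hwt k l). pose proof (Hw1 k l). pose proof (Hw2 k l). pose proof (Hw1 k (S l)).
    pose proof (Hw2 k l).
    pose proof (Cmod_ge_0 (x k l)). pose proof (Cmod_ge_0 (x (S k) l)).
    pose proof (Cmod_ge_0 (x k (S l))). pose proof (Cmod_ge_0 (x (S k) (S l))).
    apply Rle_trans with (wt k l * (Cmod (x k l) + Cmod (x (S k) l) + Cmod (x k (S l)) + Cmod (x (S k) (S l)))).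
    { apply Rmult_le_compat_l; auto. }
    rewrite !Rmult_plus_distr_l.
    repeat apply Rplus_le_compat; try lra; apply Rmult_le_compat_r; auto; lra. }
  intros m n.
  eapply Rle_trans.
  { apply sumR_le; intro k. apply sumR_le; intro l. apply Hpt. }
  apply Rle_trans with (sum_n (fun k => sum_n (a k) n + sum_n (fun l => a (S k) l) n
     + sum_n (fun l => a k (S l)) n + sum_n (fun l => a (S k) (S l)) n) m).
  { apply sumR_le; intro k. rewrite !sumR_plus. apply Req_le; reflexivity. }
  rewrite !sumR_plus.
  assert (T1 : sum_n (fun k => sum_n (a k) n) m <= M) by apply HM.
  assert (T2 : sum_n (fun k => sum_n (fun l => a (S k) l) n) m <= M).
  { eapply Rle_trans; [apply (sumR_shift_le (fun k => sum_n (a k) n))|]; auto. }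
  assert (T3 : sum_n (fun k => sum_n (fun l => a k (S l)) n) m <= M).
  { eapply Rle_trans; [|apply (HM m (S n))].
    apply sumR_le; intro k. apply (sumR_shift_le (a k)); auto. }
  assert (T4 : sum_n (fun k => sum_n (fun l => a (S k) (S l)) n) m <= M).
  { eapply Rle_trans; [|apply (HM (S m) (S n))].
    eapply Rle_trans; [|apply (sumR_shift_le (fun k => sum_n (a k) (S n)))]; auto.
    apply sumR_le; intro k. apply (sumR_shift_le (a (S k))); auto. }
  lra.
Qed.

Definition x0 : dseq := fun k l => match k with O => RtoC 1 | S _ => RtoC 0 end.

Lemma sumR_zero n : sum_n (fun _ : nat => 0) n = 0.
Proof. induction n. rewrite sum_O; auto. rewrite sumR_Sn, IHn. Rring. Qed.

Lemma Cmod_Cminus_self (z : C) : Cmod (Cminus z z) = 0.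
Proof.
  replace (Cminus z z) with (RtoC 0). apply Cmod_0.
  destruct z. unfold Cminus, Cplus, Copp, RtoC. simpl. f_equal; ring.
Qed.

Lemma x0_tail k l : (1 <= k)%nat -> Cmod (Cminus (x0 k l) (RtoC 0)) = 0.
Proof. intros Hk. destruct k. lia. simpl. apply Cmod_Cminus_self. Qed.

Lemma part2 th : H th x0 /\ ~ intLu x0.
Proof.
  split.
  - split.
    + exists 0. intros m n.
      apply Rle_trans with (sum_n (fun _ : nat => sum_n (fun _ : nat => 0) n) m).
      * apply sumR_le; intro k; apply sumR_le; intro l.
        replace (Defs.Delta x0 k l) with (RtoC 0).
        { rewrite Cmod_wt, Cmod_0. lra. }
        destruct k; unfold Defs.Delta, x0, Cminus, Cplus, Copp, RtoC; simpl; f_equal; ring.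
      * apply Req_le. rewrite (sum_n_ext _ (fun _ => 0)); [apply sumR_zero|].
        intros k. apply sumR_zero.
    + assert (Hp : p_conv x0 (RtoC 0)).
      { intros eps He. exists 1%nat. intros k l Hk _. rewrite x0_tail; auto. }
      assert (Hr : forall k, seq_conv (fun l => x0 k l)).
      { intros k. exists (x0 k 0%nat). intros eps He. exists 0%nat. intros n _.
        destruct k; simpl; rewrite Cmod_Cminus_self; auto. }
      assert (Hc : forall l, seq_conv (fun k => x0 k l)).
      { intros l. exists (RtoC 0). intros eps He. exists 1%nat. intros k Hk.
        rewrite x0_tail; auto. }
      assert (Hb : bounded_dseq x0).
      { exists 1. intros k l. destruct k; simpl.
        - rewrite Cmod_R, Rabs_R1. lra.
        - rewrite Cmod_0. lra. }
      destruct th; simpl; unfold C0, conv, bp_conv, r_conv; auto.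
  - intros [M HM]. destruct (INR_unbounded M) as [n Hn].
    specialize (HM 0%nat n). rewrite sum_O in HM.
    assert (INR (S n) <= sum_n (fun l => Cmod (Cmult (RtoC (wt 0 l)) (x0 0%nat l))) n).
    { eapply Rle_trans; [|apply (sumR_term _ n n)]; [| intros; apply Cmod_ge_0 | lia].
      cbv beta. simpl x0. rewrite Cmod_wt, Cmod_R, Rabs_R1. unfold wt. rewrite INR_1. lra. }
    rewrite S_INR in *. lra.
Qed.

Theorem corollary2p5 (th : mode) :
  (forall x : dseq, intLu x -> H th x) /\
  (exists x : dseq, H th x /\ ~ intLu x).
Proof.
  split.
  - intros x. apply part1.
  - exists x0. apply part2.
Qed.
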